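(* Let $\alpha\in\Bbbk$, $f=z(z+\alpha)$, $A=A(f)$. Every degree-$0$ automorphism of the $\mathbb{Z}$-algebra $\overline{A}$ is inner.
   Context: $\Bbbk$ algebraically closed of characteristic $0$; $A=A(f)$ is generated by $\Bbbk[z],x,y$ with $xz=(z+1)x$, $yz=(z-1)y$, $xy=f$, $yx=f(z-1)$, graded by $\deg x=1,\deg y=-1,\deg z=0$. The $\mathbb{Z}$-algebra associated to $A$ is $\overline{A}=\bigoplus_{i,j\in\mathbb{Z}}\overline{A}_{i,j}$ with $\overline{A}_{i,j}=A_{j-i}$, with multiplication $\overline{A}_{i,j}\times\overline{A}_{j,k}\to\overline{A}_{i,k}$ induced by multiplication in $A$ and $\overline{A}_{i,j}\overline{A}_{j',k}=0$ for $j\neq j'$; $1_i\in\overline{A}_{i,i}=A_0$ denotes the unit. A degree-$0$ automorphism is a $\Bbbk$-algebra automorphism $\gamma$ of $\overline{A}$ with $\gamma(\overline{A}_{i,j})=\overline{A}_{i,j}$ and $\gamma(1_i)=1_i$ for all $i,j$. Such $\gamma$ is inner if for all $m,n\in\mathbb{Z}$ there exist $g_m\in\overline{A}_{m,m}$ and $h_n\in\overline{A}_{n,n}$ with $\gamma(w)=g_mwh_n$ for all $w\in\overline{A}_{m,n}$. *)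

(* Defs.v *)
From HB Require Import structures.
From mathcomp Require Import all_boot all_order all_algebra.
Set Implicit Arguments. Unset Strict Implicit. Unset Printing Implicit Defensive.
Import Order.TTheory GRing.Theory Num.Theory.
Local Open Scope ring_scope.

(* Concrete model of the generalized Weyl algebra A = A(f) over k, graded by
   deg x = 1, deg y = -1, deg z = 0.  The homogeneous component A_d is the free
   left k[z]-module of rank one with basis u_d, where u_d = x^d (d >= 0) and
   u_d = y^(-d) (d < 0).  An element of A_d is represented by its coefficient
   polynomial p : {poly k}, standing for p(z) * u_d. *)

Section GWA.
Variable k : fieldType.
Variable f : {poly k}.

(* shiftp c p = p(z + c) = sigma^c(p); we have u_d * p = shiftp d p * u_d. *)
Definition shiftp (c : int) (p : {poly k}) : {poly k} :=
  p \Po ('X + (c%:~R)%:P).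

(* x^r y^r = f(z) f(z+1) ... f(z+r-1) *)
Definition Pprod (r : nat) : {poly k} := \prod_(i < r) shiftp (Posz i) f.
(* y^r x^r = f(z-1) f(z-2) ... f(z-r) *)
Definition Qprod (r : nat) : {poly k} := \prod_(i < r) shiftp (- Posz i.+1) f.

(* u_d * u_e = ucoef d e * u_(d+e) *)
Definition ucoef (d e : int) : {poly k} :=
  match d, e with
  | Posz a, Negz b =>
      let r := minn a b.+1 in shiftp (Posz (a - r)%N) (Pprod r)
  | Negz a, Posz b =>
      let r := minn a.+1 b in shiftp (- Posz (a.+1 - r)%N) (Qprod r)
  | _, _ => 1
  end.

(* Multiplication A_d x A_e -> A_(d+e):
   (a u_d)(b u_e) = a * sigma^d(b) * (u_d u_e). *)
Definition mulA (d e : int) (a b : {poly k}) : {poly k} :=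
  a * shiftp d b * ucoef d e.

(* A degree-0 automorphism of the Z-algebra Abar (Abar_{i,j} = A_{j-i}),
   given by its restrictions gam i j : Abar_{i,j} -> Abar_{i,j}. *)
Definition degree0_aut (gam : int -> int -> {poly k} -> {poly k}) : Prop :=
  [/\ (forall i j (c : k) (a b : {poly k}),
         gam i j (c *: a + b) = c *: gam i j a + gam i j b),
      (forall i j, bijective (gam i j)),
      (forall i j l (a b : {poly k}),
         gam i l (mulA (j - i) (l - j) a b)
         = mulA (j - i) (l - j) (gam i j a) (gam j l b)) &
      (forall i, gam i i 1 = 1)].

(* gam is inner: there are g_m in Abar_{m,m} = A_0 and h_n in Abar_{n,n} = A_0
   with gam(w) = g_m w h_n for all w in Abar_{m,n} = A_{n-m}. *)
Definition inner_aut (gam : int -> int -> {poly k} -> {poly k}) : Prop :=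
  exists g h : int -> {poly k},
    forall (m n : int) (w : {poly k}),
      gam m n w = mulA (n - m) 0 (mulA 0 (n - m) (g m) w) (h n).

End GWA.

(* Main.v *)
Require Import Defs.
From HB Require Import structures.
From mathcomp Require Import all_boot all_order all_algebra.
From mathcomp Require Import ring.
Import GRing.Theory.
Local Open Scope ring_scope.

Section Helpers.
Variable k : fieldType.
Implicit Types (p a b w : {poly k}) (f : {poly k}).

Lemma shiftp0 p : shiftp 0 p = p.
Proof. by rewrite /shiftp mulr0z polyC0 addr0 comp_polyXr. Qed.

Lemma shiftpC (c : int) (x : k) : shiftp c x%:P = x%:P.
Proof. by rewrite /shiftp comp_polyC. Qed.

Lemma shiftp1 (c : int) : shiftp c (1 : {poly k}) = 1.
Proof. by rewrite -polyC1 shiftpC. Qed.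

Lemma shiftp_eq0 (c : int) p : (shiftp c p == 0) = (p == 0).
Proof. by rewrite /shiftp -!size_poly_eq0 size_comp_poly2 // size_XaddC. Qed.

Lemma ucoef0l f d : ucoef f 0 d = 1.
Proof.
case: d => [n|n] //=.
have -> : minn 0 n.+1 = 0%N by [].
by rewrite /Pprod big_ord0 shiftp1.
Qed.

Lemma ucoefr0 f d : ucoef f d 0 = 1.
Proof.
case: d => [n|n] //=.
have -> : minn n.+1 0 = 0%N by rewrite minn0.
by rewrite /Qprod big_ord0 shiftp1.
Qed.

Lemma ucoef_neq0 f d e : f != 0 -> ucoef f d e != 0.
Proof.
move=> f0; case: d => [n|n]; case: e => [m|m] /=; rewrite ?oner_neq0 //.
  rewrite shiftp_eq0 /Pprod; apply/prodf_neq0 => i _; by rewrite shiftp_eq0.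
rewrite shiftp_eq0 /Qprod; apply/prodf_neq0 => i _; by rewrite shiftp_eq0.
Qed.

Lemma ucoef1N1 f : ucoef f 1 (-1) = f.
Proof.
rewrite /=.
have -> : minn 1 1 = 1%N by [].
by rewrite /Pprod big_ord1 !shiftp0.
Qed.

Lemma mulA0l f d a b : Defs.mulA f 0 d a b = a * b.
Proof. by rewrite /Defs.mulA shiftp0 ucoef0l mulr1. Qed.

Lemma mulAr0 f d a b : Defs.mulA f d 0 a b = a * shiftp d b.
Proof. by rewrite /Defs.mulA ucoefr0 mulr1. Qed.

Lemma size2E p : size p = 2%N -> p = (p`_1)%:P * 'X + (p`_0)%:P.
Proof.
move=> sp; apply/polyP => i; rewrite coefD coefCM coefX coefC.
case: i => [|[|i]] /=; rewrite ?mulr0 ?mulr1 ?add0r ?addr0 //.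
by rewrite nth_default // sp.
Qed.

Lemma lin_coef (A B C D : k) :
  A%:P * 'X + B%:P = C%:P * 'X + D%:P -> A = C /\ B = D.
Proof.
move=> E; split.
  by have := congr1 (fun p => p`_1) E; rewrite /= !coefD !coefCM !coefX !coefC /= !mulr1 !addr0.
by have := congr1 (fun p => p`_0) E; rewrite /= !coefD !coefCM !coefX !coefC /= !mulr0 !add0r.
Qed.

Lemma quad_coef (A B C : k) :
  A%:P * 'X^2 + B%:P * 'X + C%:P = 0 -> A = 0 /\ B = 0.
Proof.
move=> E; split.
  by have := congr1 (fun p => p`_2) E; rewrite /= !coefD !coefCM coefXn coefX !coefC ?coef0 /= mulr1 mulr0 !addr0.
by have := congr1 (fun p => p`_1) E; rewrite /= !coefD !coefCM coefXn coefX !coefC ?coef0 /= mulr1 mulr0 add0r addr0.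
Qed.

End Helpers.

Theorem lemma5p1 (k : closedFieldType) (hchar : [pchar k] =i pred0)
    (alpha : k) (gam : int -> int -> {poly k} -> {poly k}) :
  degree0_aut ('X * ('X + alpha%:P)) gam ->
  inner_aut ('X * ('X + alpha%:P)) gam.
Proof.
set f := 'X * ('X + alpha%:P).
move=> [Hlin Hbij Hmul H1].
have f0 : f != 0 by rewrite mulf_neq0 // -size_poly_eq0 ?size_polyX ?size_XaddC.
have two0 : (2 : k) != 0 by rewrite ((pcharf0P k).1 hchar 2%N).
have Hadd i j a b : gam i j (a + b) = gam i j a + gam i j b.
  by have := Hlin i j 1 a b; rewrite !scale1r.
have Hsc i j (c : k) a : gam i j (c *: a) = c *: gam i j a.
  have := Hlin i j c a 0; rewrite addr0 => ->.
  by have := Hlin i j (-1) 0 0; rewrite scaler0 addr0 scaleN1r addNr => ->; rewrite addr0.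
have Hsurj i j y : exists w, gam i j w = y.
  by case: (Hbij i j) => g _ gK; exists (g y); rewrite gK.
have G m n w : gam m n w = gam m m w * gam m n 1.
  by have := Hmul m m n w 1; rewrite subrr !mulA0l mulr1.
have U m n : exists2 c : k, c != 0 & gam m n 1 = c%:P.
  have [w Hw] := Hsurj m n 1.
  have : gam m n 1 \is a GRing.unit.
    by apply/unitrPr; exists (gam m m w); rewrite mulrC -G.
  by rewrite poly_unitE => /andP[/size_poly1P].
set q := fun m => gam m m 'X.
have Phi m p : gam m m p = p \Po q m.
  elim/poly_ind: p => [|p c IH].
    by rewrite -(scale0r 0) Hsc !scale0r comp_poly0.
  rewrite Hadd -(mul1r 'X) mulrA.
  have := Hmul m m m (p * 1) 'X; rewrite subrr mulA0l => ->.
  rewrite mulA0l mulr1 IH -alg_polyC Hsc H1 comp_polyD comp_polyM comp_polyX.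
  by rewrite alg_polyC comp_polyC.
set lam := fun m => (q m)`_1.
set mu := fun m => (q m)`_0.
have Hq m : q m = (lam m)%:P * 'X + (mu m)%:P /\ lam m != 0.
  have [w Hw] := Hsurj m m 'X.
  rewrite Phi in Hw.
  have := size_comp_poly w (q m); rewrite Hw size_polyX.
  move=> /esym/eqP.
  rewrite muln_eq1 => /andP[_ /eqP s1].
  have s2 : size (q m) = 2%N by case: (size (q m)) s1 => [|[|[|n]]].
  split; first exact: size2E.
  have := lead_coef_eq0 (q m); rewrite /lead_coef s2 /= => ->.
  by rewrite -size_poly_eq0 s2.
have Hshift m : lam (m + 1) = lam m /\ mu m + 1 = lam (m + 1) + mu (m + 1).
  have := Hmul m (m + 1) (m + 1) 1 'X.
  have -> : m + 1 - m = 1 by ring.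
  rewrite subrr !mulAr0 mul1r G.
  have [a a0 ->] := U m (m + 1).
  rewrite Phi Phi /shiftp mulr1z comp_polyX.
  rewrite mulrC => /(mulfI _) E.
  have /E : a%:P != 0 by rewrite polyC_eq0.
  have [-> _] := Hq m; have [-> _] := Hq (m + 1).
  rewrite !comp_polyX !comp_polyD ?comp_polyM !comp_polyC ?comp_polyX => E2.
  have L : (lam m)%:P * 'X + (mu m + 1)%:P = (lam (m+1))%:P * 'X + (lam (m+1) + mu (m+1))%:P.
    transitivity ((lam m)%:P * 'X + (mu m)%:P + 1%:P); first by rewrite rmorphD addrA.
    by rewrite E2 rmorphD; ring.
  by case/lin_coef: L => A B; split.
have Hf m : 2 * mu m + alpha = lam m * alpha.
  have := Hmul m (m + 1) m 1 1.
  have -> : m + 1 - m = 1 by ring.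
  have -> : m - (m + 1) = -1 by ring.
  rewrite /Defs.mulA shiftp1 !mul1r ucoef1N1 Phi.
  have [a a0 ->] := U m (m + 1); have [b b0 ->] := U (m + 1) m.
  rewrite shiftpC /f comp_polyM comp_polyD comp_polyX comp_polyC.
  have [-> lam0] := Hq m => E.
  have Q : ((lam m) ^+ 2 - a * b)%:P * 'X^2 + (lam m * (2 * mu m + alpha) - a * b * alpha)%:P * 'X
     + (mu m * (mu m + alpha))%:P = 0.
    transitivity (((lam m)%:P * 'X + (mu m)%:P) * ((lam m)%:P * 'X + (mu m)%:P + alpha%:P)
       - a%:P * b%:P * ('X * ('X + alpha%:P))).
      rewrite ?rmorphD ?rmorphB ?rmorphM ?rmorphX ?rmorph_nat /=; ring.
    by rewrite E subrr.
  case/quad_coef: Q => /eqP; rewrite subr_eq0 => /eqP Hab /eqP; rewrite subr_eq0 -Hab.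
  move=> /eqP Hl; apply: (mulfI lam0); rewrite Hl; ring.
have Hid m : q m = 'X.
  have [Hl1 Hm1] := Hshift m.
  have Hmu : mu (m + 1) = mu m.
    apply: (mulfI two0); apply: (addIr alpha); rewrite Hf Hf Hl1 //.
  have Hlam : lam m = 1.
    by move: Hm1; rewrite Hmu Hl1 addrC => /addIr.
  have Hmu0 : mu m = 0.
    have := Hf m; rewrite Hlam mul1r -{2}(add0r alpha) => /addIr /eqP.
    by rewrite mulf_eq0 (negbTE two0) /= => /eqP.
  by rewrite (Hq m).1 Hlam Hmu0 polyC1 mul1r polyC0 addr0.
have Phi' m p : gam m m p = p.
  by rewrite Phi Hid comp_polyXr.
pose c m n := (gam m n 1)`_0.
have Hc m n : gam m n 1 = (c m n)%:P.
  by have [x _ Ex] := U m n; rewrite /c Ex coefC.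
have Gm m n w : gam m n w = w * (c m n)%:P.
  by rewrite G Phi' Hc.
have Ecoc m n : c m n = c m 0 * c 0 n.
  have := Hmul m 0 n 1 1.
  rewrite /Defs.mulA shiftp1 !mul1r !Hc shiftpC => E.
  have nz : ucoef f (0 - m) (n - 0) != 0 by apply: ucoef_neq0.
  apply: polyC_inj; apply: (@mulfI _ _ nz).
  rewrite -Gm E rmorphM; ring.
exists (fun m => (c m 0)%:P), (fun n => (c 0 n)%:P) => m n w.
rewrite Gm mulAr0 mulA0l shiftpC Ecoc rmorphM; ring.
Qed.
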